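(* Let $G$ be a compact abelian group with discrete dual group $\Gamma$, let $E \subset \Gamma$, $n \in \mathbb{N}$ and $p$ a prime number. The following are equivalent: (1) $E$ is $p^n$-PR; (2) for all $1 \le k \le n$, the map $\pi_{p^k}$ is one-to-one on $E$ and $\pi_{p^k}(E)$ is $p^{n+1-k}$-PR as a subset of $\Gamma/\Gamma_{p^k}$; (3) for some $1 \le k \le n$, the map $\pi_{p^k}$ is one-to-one on $E$ and $\pi_{p^k}(E)$ is $p^{n+1-k}$-PR as a subset of $\Gamma/\Gamma_{p^k}$.
   Context: Characters are written multiplicatively; $\mathbb{Z}_N$ is identified with the $N$-th roots of unity in the unit circle $\mathbb{T}$. For a discrete abelian group $\Delta$ with compact dual $\widehat{\Delta}$, a subset $E \subset \Delta$ is $N$-PR if for every function $\varphi: E \to \mathbb{Z}_N$ there exists $x \in \widehat{\Delta}$ with $\varphi(\gamma) = \gamma(x)$ for all $\gamma \in E$. Let $\Gamma_0$ be the torsion subgroup of $\Gamma$; for a prime $p$ and $k \in \mathbb{N}$, $\Gamma_{p^k}$ is the subgroup of $\Gamma_0$ of elements whose order is not divisible by $p^k$, and $\pi_{p^k}: \Gamma \to \Gamma/\Gamma_{p^k}$ is the quotient map. *)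

(* Defs.v *)
From mathcomp Require Import all_boot all_algebra.
From mathcomp Require Import reals.
From mathcomp.real_closed Require Import complex.
Set Implicit Arguments. Unset Strict Implicit. Unset Printing Implicit Defensive.
Import GRing.Theory Num.Theory.
Local Open Scope ring_scope.

(* The circle group T is {z : R[i] | |z| = 1} (R : realType, R[i] the complex
   numbers), written multiplicatively.  A discrete abelian group is a zmodType
   (written additively).  The dual of Delta is the group of characters
   Delta -> T (every homomorphism is continuous since Delta is discrete). *)

Definition is_character (R : realType) (D : zmodType) (chi : D -> R[i]) : Prop :=
  (forall x, `|chi x| = 1) /\ (forall x y, chi (x + y) = chi x * chi y).

(* Z_N is identified with the N-th roots of unity in T. *)
Definition PR (R : realType) (N : nat) (D : zmodType) (E : D -> Prop) : Prop :=
  forall phi : D -> R[i], (forall g, E g -> phi g ^+ N = 1) ->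
    exists chi : D -> R[i], is_character chi /\ (forall g, E g -> chi g = phi g).

Definition is_order (D : zmodType) (g : D) (m : nat) : Prop :=
  (0 < m)%N /\ g *+ m = 0 /\ (forall j, (0 < j)%N -> (j < m)%N -> g *+ j != 0).

Definition Gamma_pk (D : zmodType) (p k : nat) (g : D) : Prop :=
  exists m, is_order g m /\ ~~ (p ^ k %| m)%N.

(* pi is a quotient map D -> Q with kernel H (so Q is D/H up to iso) *)
Definition is_quotient_map (D Q : zmodType) (H : D -> Prop) (pi : D -> Q) : Prop :=
  (forall x y, pi (x + y) = pi x + pi y) /\
  (forall q, exists x, pi x = q) /\
  (forall x, pi x = 0 <-> H x).

Definition injective_on (A B : Type) (E : A -> Prop) (f : A -> B) : Prop :=
  forall x y, E x -> E y -> f x = f y -> x = y.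

Definition image_set (A B : Type) (f : A -> B) (E : A -> Prop) : B -> Prop :=
  fun b => exists2 a, E a & f a = b.

(* Main.v *)
Require Import Defs.
From mathcomp Require Import all_boot all_algebra.
From mathcomp Require Import reals.
From mathcomp.real_closed Require Import complex.
From mathcomp Require Import boolp classical_sets.
From mathcomp Require Import zify.

Module Helpers.
Import GRing.Theory Num.Theory.
Local Open Scope ring_scope.
Set Implicit Arguments. Unset Strict Implicit. Unset Printing Implicit Defensive.

Section PH.
Variable C : numClosedFieldType.
Variable D : zmodType.

Definition subgrp (H : D -> Prop) := H 0 /\ (forall x y, H x -> H y -> H (x - y)).
Definition phom (H : D -> Prop) (f : D -> C) :=
  (forall x, H x -> `|f x| = 1) /\ (forall x y, H x -> H y -> f (x + y) = f x * f y).

Lemma norm1_neq0 (z : C) : `|z| = 1 -> z != 0.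
Proof. by move=> h; apply/eqP => z0; move: h; rewrite z0 normr0 => /eqP; rewrite eq_sym oner_eq0. Qed.

Lemma normz1 (z : C) (i : int) : `|z| = 1 -> `|z ^ i| = 1.
Proof.
move=> h; case: i => n; first by rewrite -exprnP normrX h expr1n.
by rewrite NegzE -exprnN normfV normrX h expr1n invr1.
Qed.

Variables (H : D -> Prop) (f : D -> C).
Hypothesis sH : subgrp H.
Hypothesis fH : phom H f.

Lemma sgN x : H x -> H (- x).
Proof. by move=> hx; rewrite -sub0r; apply: sH.2 => //; exact: sH.1. Qed.
Lemma sgD x y : H x -> H y -> H (x + y).
Proof. by move=> hx hy; rewrite -(opprK y); apply: sH.2 => //; exact: sgN. Qed.
Lemma sgz x i : H x -> H (x *~ i).
Proof.
move=> hx; have hn : forall n : nat, H (x *+ n).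
  by elim=> [|n ih]; [rewrite mulr0n; exact: sH.1 | rewrite mulrS; exact: sgD].
by case: i => n; rewrite ?NegzE ?mulrNz; [exact: hn | apply: sgN; exact: hn].
Qed.

Lemma ph0 : f 0 = 1.
Proof.
have h := fH.2 0 0 sH.1 sH.1; rewrite addr0 in h.
have nz := norm1_neq0 (fH.1 0 sH.1).
by apply: (mulfI nz); rewrite mulr1 -h.
Qed.

Lemma phN x : H x -> f (- x) = (f x)^-1.
Proof.
move=> hx; have := fH.2 _ _ (sgN hx) hx; rewrite addNr ph0 => h.
have nz := norm1_neq0 (fH.1 x hx).
by apply: (mulIf nz); rewrite -h mulVf.
Qed.

Lemma phz x i : H x -> f (x *~ i) = f x ^ i.
Proof.
move=> hx; have hn : forall n : nat, f (x *+ n) = f x ^+ n.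
  elim=> [|n ih]; first by rewrite mulr0n ph0 expr0.
  rewrite mulrS fH.2 //; last by rewrite -mulrz_nat; exact: sgz.
  by rewrite ih exprS.
case: i => n; first by rewrite -exprnP; exact: hn.
rewrite NegzE mulrNz phN; last exact: sgz.
by rewrite (hn n.+1) exprnN.
Qed.

Lemma phsum (I : Type) (u : seq I) (F : I -> D) :
  (forall i, H (F i)) -> f (\sum_(i <- u) F i) = \prod_(i <- u) f (F i).
Proof.
move=> hF; elim: u => [|a u ih]; first by rewrite !big_nil ph0.
rewrite !big_cons fH.2 ?ih //.
elim: u {ih} => [|b u ih]; rewrite ?big_nil ?big_cons; first exact: sH.1.
exact: sgD.
Qed.

End PH.


Section Ext1.
Variable C : numClosedFieldType.
Variable D : zmodType.
Variables (H : D -> Prop) (f : D -> C) (g : D).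
Hypothesis sH : subgrp H.
Hypothesis fH : phom H f.

Lemma exists_w : exists w : C, `|w| = 1 /\
  (forall i : int, H (g *~ i) -> f (g *~ i) = w ^ i).
Proof.
case: (pselect (exists m : nat, `[< (0 < m)%N /\ H (g *+ m) >])) => [ex|nex].
  case: (ex_minnP ex) => m0 /asboolP [m0p Hm0] minm.
  set w := m0.-root (f (g *+ m0)).
  have wK : w ^+ m0 = f (g *+ m0) by rewrite /w rootCK.
  exists w; split.
    have : `|w| ^+ m0 == 1 by rewrite -normrX wK (fH.1 _ Hm0).
    by rewrite pexpr_eq1 // => /eqP.
  move=> i Hi.
  have Hr : H (g *~ (i %% m0)%Z).
    have -> : g *~ (i %% m0)%Z = g *~ i - (g *~ m0) *~ (i %/ m0)%Z.
      by rewrite -mulrzA mulrC -mulrzBr {2}(divz_eq i m0) addrC addKr.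
    apply: sH.2 => //; exact: sgz.
  have r0 : (i %% m0)%Z = 0.
    have ge : 0 <= (i %% m0)%Z by apply: modz_ge0; rewrite eqz_nat -lt0n.
    have lt : (i %% m0)%Z < m0 by apply: ltz_pmod; rewrite ltz_nat.
    move: ge lt Hr; case: (i %% m0)%Z => [[|r]|r] // _ lt Hr.
    have := minm r.+1; rewrite (_ : `[< _ >] = true); last by apply/asboolP.
    by move=> /(_ isT); rewrite leqNgt -ltz_nat lt.
  have -> : i = (i %/ m0)%Z * m0 by rewrite {1}(divz_eq i m0) r0 addr0.
  rewrite mulrC mulrzA (phz sH fH _ Hm0).
  by rewrite -wK exprnP exprz_exp.
exists 1; split; first by rewrite normr1.
move=> i Hi; rewrite exp1rz.
case: i Hi => [[|m]|m] Hi; first by rewrite mulr0z (ph0 sH fH).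
  by exfalso; apply: nex; exists m.+1; apply/asboolP.
exfalso; apply: nex; exists m.+1; apply/asboolP; split => //.
by move: Hi; rewrite NegzE mulrNz => /(sgN sH); rewrite opprK.
Qed.
End Ext1.

Section Ext2.
Variable C : numClosedFieldType.
Variable D : zmodType.
Variables (H : D -> Prop) (f : D -> C) (g : D).
Hypothesis sH : subgrp H.
Hypothesis fH : phom H f.

Lemma ext_step : exists H' (f' : D -> C), subgrp H' /\ phom H' f' /\
  (forall x, H x -> H' x) /\ (forall x, H x -> f' x = f x) /\ H' g.
Proof.
have [w [w1 wP]] := exists_w g sH fH.
have w0 := norm1_neq0 w1.
pose H' x := exists hi : D * int, H hi.1 /\ x = hi.1 + g *~ hi.2.
pose f' x := match pselect (H' x) with
  | left e => let hi := proj1_sig (cid e) in f hi.1 * w ^ hi.2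
  | right _ => 1 end.
have wd : forall h1 h2 i1 i2, H h1 -> H h2 -> h1 + g *~ i1 = h2 + g *~ i2 ->
    f h1 * w ^ i1 = f h2 * w ^ i2.
  move=> h1 h2 i1 i2 H1 H2 e.
  have e2 : g *~ (i1 - i2) = h2 - h1.
    by rewrite mulrzBr; apply: (addrI h1); rewrite addrA e addrK addrC subrK.
  have Hd : H (h2 - h1) by apply: sH.2.
  have := wP _ (eq_ind_r H Hd e2); rewrite e2 => fd.
  have -> : h2 = h1 + (h2 - h1) by rewrite addrC subrK.
  rewrite fH.2 // fd -mulrA -expfzDr // subrK //.
have f'E : forall h i, H h -> f' (h + g *~ i) = f h * w ^ i.
  move=> h i Hh; rewrite /f'; case: pselect => [e|ne]; last first.
    by exfalso; apply: ne; exists (h, i).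
  case: (cid e) => [[h' i']] /= [Hh' ee]; exact: wd.
have H'E : forall x, H' x -> exists h i, H h /\ x = h + g *~ i.
  by move=> x [[h i] [Hh ->]]; exists h, i.
exists H', f'; split; last split; last split; last split.
- split; first by exists (0, 0%Z); split => //=; [exact: sH.1 | rewrite mulr0z addr0].
  move=> x y /H'E [h1 [i1 [H1 ->]]] /H'E [h2 [i2 [H2 ->]]].
  exists (h1 - h2, i1 - i2); split; first by apply: sH.2.
  by rewrite /= mulrzBr opprD !addrA; congr (_ + _); rewrite addrAC.
- split.
    move=> x /H'E [h [i [Hh ->]]]; rewrite f'E // normrM (fH.1 _ Hh) mul1r.
    exact: normz1.
  move=> x y /H'E [h1 [i1 [H1 ->]]] /H'E [h2 [i2 [H2 ->]]].
  have -> : h1 + g *~ i1 + (h2 + g *~ i2) = (h1 + h2) + g *~ (i1 + i2).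
    by rewrite mulrzDr addrACA.
  rewrite !f'E //; last exact: sgD.
  by rewrite fH.2 // expfzDr // mulrACA.
- by move=> x Hx; exists (x, 0%Z); rewrite /= mulr0z addr0.
- by move=> x Hx; have := f'E x 0%Z Hx; rewrite mulr0z addr0 expr0z mulr1.
- by exists (0, 1%Z); split => /=; [exact: sH.1 | rewrite add0r mulr1z].
Qed.
End Ext2.


Section Zext.
Variable C : numClosedFieldType.
Variable D : zmodType.
Variables (H0 : D -> Prop) (f0 : D -> C).
Hypothesis sH0 : subgrp H0.
Hypothesis fH0 : phom H0 f0.

Definition good (hf : (D -> Prop) * (D -> C)) :=
  subgrp hf.1 /\ phom hf.1 hf.2 /\ (forall x, H0 x -> hf.1 x) /\
  (forall x, H0 x -> hf.2 x = f0 x).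

Definition T := {hf | good hf}.
Definition Hs (t : T) := (proj1_sig t).1.
Definition fs (t : T) := (proj1_sig t).2.
Definition leP (s t : T) := (forall x, Hs s x -> Hs t x) /\ (forall x, Hs s x -> fs t x = fs s x).
Definition leb (s t : T) : bool := `[< leP s t >].

Lemma lebP s t : leb s t <-> leP s t.
Proof. by split => [/asboolP|/asboolP]. Qed.

Definition t0 : T := exist _ (H0, f0) (conj sH0 (conj fH0 (conj (fun x h => h) (fun x h => erefl)))).

Lemma le_t0 t : leP t0 t.
Proof. by case: t => [[H f] [? [? [? ?]]]]; split. Qed.

Lemma extend : exists chi : D -> C, phom (fun _ => True) chi /\ (forall x, H0 x -> chi x = f0 x).
Proof.
have [t tmax] : exists t, premaximal leb t.
  apply: (ZL_preorder t0).
  - by move=> t; apply/lebP; split.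
  - move=> r s t /lebP [h1 h2] /lebP [h3 h4]; apply/lebP; split; first by auto.
    by move=> x hx; rewrite h4 ?h2 //; auto.
  move=> A Atot.
  pose A' t := A t \/ t = t0.
  have A'tot : forall s t, A' s -> A' t -> leP s t \/ leP t s.
    move=> s t [As|->] [At|->].
    - by have [/lebP|/lebP] := Atot s t As At; auto.
    - by right; apply: le_t0.
    - by left; apply: le_t0.
    - by left; apply: le_t0.
  pose Hu x := exists t, A' t /\ Hs t x.
  pose fu x := match pselect (Hu x) with
    | left e => fs (proj1_sig (cid e)) x | right _ => 1 end.
  have fuE : forall t x, A' t -> Hs t x -> fu x = fs t x.
    move=> t x At Htx; rewrite /fu; case: pselect => [e|ne]; last first.
      by exfalso; apply: ne; exists t.
    case: (cid e) => s /= [As Hsx].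
    by have [[l1 l2]|[l1 l2]] := A'tot s t As At; [rewrite l2 | rewrite l2].
  have comm2 : forall s t x y, A' s -> A' t -> Hs s x -> Hs t y ->
      exists u, A' u /\ Hs u x /\ Hs u y.
    move=> s t x y As At Hx Hy.
    have [[l1 _]|[l1 _]] := A'tot s t As At; [exists t | exists s]; auto.
  have gu : good (Hu, fu).
    split; last split; last split.
    - split; first by exists t0; split; [right | exact: (proj1 (proj2_sig t0)).1].
      move=> x y [s [As Hx]] [t [At Hy]].
      have [u [Au [Hux Huy]]] := comm2 _ _ _ _ As At Hx Hy.
      exists u; split => //; exact: (proj1 (proj2_sig u)).2.
    - split.
        move=> x [s [As Hx]]; rewrite /= (fuE s) //; exact: (proj1 (proj2 (proj2_sig s))).1.
      move=> x y [s [As Hx]] [t [At Hy]].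
      have [u [Au [Hux Huy]]] := comm2 _ _ _ _ As At Hx Hy.
      have Hxy : Hs u (x + y) by apply: sgD => //; exact: (proj1 (proj2_sig u)).
      rewrite /= !(fuE u) //; exact: (proj1 (proj2 (proj2_sig u))).2.
    - by move=> x Hx; exists t0; split; [right|].
    - by move=> x Hx; rewrite /= (fuE t0) //; right.
  exists (exist _ (Hu, fu) gu) => s As; apply/lebP; split.
    by move=> x Hx; exists s; split => //; left.
  by move=> x Hx; rewrite /fs /= (fuE s) //; left.
exists (fs t); split; last first.
  by move=> x Hx; case: t tmax => [[H f] [? [? [? e]]]] _ /=; exact: e.
have allH : forall g, Hs t g.
  move=> g; case: t tmax => [[H f] [sH [fH [i e]]]] tmax /=.
  have [H' [f' [sH' [fH' [iH' [eH' gH']]]]]] := ext_step g sH fH.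
  have g' : good (H', f').
    split; [exact: sH' | split; [exact: fH' | split]].
      by move=> x hx; apply: iH'; exact (i x hx).
    by move=> x hx; rewrite /= eH' ?e //; [exact (i x hx)].
  have := tmax (exist _ (H', f') g').
  have l : leb (exist _ (H, f) (conj sH (conj fH (conj i e)))) (exist _ (H', f') g').
    by apply/lebP; split => // x hx; rewrite /fs /= eH'.
  by move=> /(_ l) /lebP [l1 _]; apply: l1.
have := proj1 (proj2 (proj2_sig t)); rewrite -/(fs t) -/(Hs t) => -[n1 n2].
by split => [x _|x y _ _]; [apply: n1 | apply: n2].
Qed.
End Zext.


Lemma exists_prim (C : numClosedFieldType) (p j : nat) : prime p -> (0 < j)%N ->
  exists z : C, (p ^ j)%N.-primitive_root z.
Proof.
move=> pp j0.
pose P : {poly C} := \poly_(i < p) 1.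
have p1 : (1 < p)%N by apply: prime_gt1.
have sP : size P = p by rewrite size_poly_eq // oner_neq0.
have [r rr] : exists r, root P r by apply/closed_rootP; rewrite sP neq_ltn p1 orbT.
move: rr; rewrite /root horner_poly => /eqP rr.
have rp : r ^+ p = 1.
  apply/eqP; rewrite -subr_eq0 subrX1; apply/eqP.
  by rewrite (eq_bigr (fun i : 'I_p => 1 * r ^+ i)) ?rr ?mulr0 // => i _; rewrite mul1r.
have r1 : r != 1.
  apply/eqP => r1; move: rr; rewrite r1.
  under eq_bigr do rewrite expr1n mulr1.
  by rewrite sumr_const card_ord => /eqP; rewrite pnatr_eq0 => /eqP p0; move: p1; rewrite p0.
have q0 : (0 < p ^ j.-1)%N by rewrite expn_gt0 prime_gt0.
set z := (p ^ j.-1)%N.-root r.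
have zq : z ^+ (p ^ j.-1) = r by rewrite /z rootCK.
have zN : z ^+ (p ^ j) = 1 by rewrite -(prednK j0) expnSr exprM zq.
have pj0 : (0 < p ^ j)%N by rewrite expn_gt0 prime_gt0.
have [m pm dm] := prim_order_exists pj0 zN.
case/(dvdn_pfactor _ _ pp): dm => i ij mi.
have [ij'|ji] := ltnP i j; last first.
  have ei : i = j by apply/eqP; rewrite eqn_leq ij ji.
  by exists z; rewrite -ei -mi.
exfalso; move/negP: r1; apply; rewrite -zq -(prim_order_dvd pm) mi.
by rewrite dvdn_exp2l // -ltnS prednK.
Qed.

Definition RC (D : zmodType) (N : nat) (E : D -> Prop) :=
  forall (u : seq D) (a : D -> int), uniq u -> (forall x, x \in u -> E x) ->
  \sum_(x <- u) x *~ a x = 0 -> forall x, x \in u -> (N%:Z %| a x)%Z.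

Lemma char_phom (R : realType) (D : zmodType) (chi : D -> R[i]) :
  is_character chi <-> phom (fun _ => True) chi.
Proof. by split => -[h1 h2]; split => [x|x y]; auto. Qed.

Lemma subgrpT (D : zmodType) : subgrp (fun _ : D => True).
Proof. by []. Qed.

Lemma PR_RC (R : realType) (D : zmodType) (p j : nat) (E : D -> Prop) :
  prime p -> (0 < j)%N -> PR R (p ^ j) E -> RC (p ^ j) E.
Proof.
move=> pp j0 hPR u a uu uE s0 x0 x0u.
have [z pz] := exists_prim R[i] pp j0.
pose phi (y : D) := if y == x0 then z else 1.
have [chi [/char_phom cchi chiE]] : exists chi : D -> R[i], is_character chi /\ (forall g, E g -> chi g = phi g).
  apply: hPR => g _; rewrite /phi; case: (g == x0); last exact: expr1n.
  exact: prim_expr_order.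
have : chi (\sum_(x <- u) x *~ a x) = z ^ a x0.
  rewrite (phsum (subgrpT D) cchi) //.
  rewrite (eq_big_seq (fun x => phi x ^ a x)); last first.
    by move=> x xu; rewrite (phz (subgrpT D) cchi) // chiE //; apply: uE.
  rewrite (big_rem x0) //= /phi eqxx big1_seq ?mulr1 // => y /andP [_].
  by rewrite mem_rem_uniq // => /andP [/negPf -> _]; rewrite exp1rz.
rewrite s0 (ph0 (subgrpT D) cchi) => /esym.
case: (a x0) => m; rewrite dvdzE /=.
  by rewrite -exprnP (prim_order_dvd pz) => ->.
rewrite NegzE -exprnN => /eqP; rewrite invr_eq1 -(prim_order_dvd pz) => ->.
done.
Qed.


Lemma big_sub (R : Type) (idx : R) (op : Monoid.com_law idx) (T : eqType)
  (u1 u : seq T) (F : T -> R) : uniq u1 -> uniq u -> {subset u1 <= u} ->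
  \big[op/idx]_(x <- u) (if x \in u1 then F x else idx) = \big[op/idx]_(x <- u1) F x.
Proof.
move=> U1 U sub; rewrite -big_mkcond -big_filter; apply: perm_big.
apply: uniq_perm; [exact: filter_uniq | exact: U1|].
move=> x; rewrite mem_filter; case xu1: (x \in u1) => //=; exact: sub.
Qed.

Definition ext (D : zmodType) (a : D -> int) (u : seq D) x := if x \in u then a x else 0.

Section RCPR.
Variables (R : realType) (D : zmodType) (N : nat) (E : D -> Prop).
Hypothesis N0 : (0 < N)%N.
Hypothesis hRC : RC N E.
Variable phi : D -> R[i].
Hypothesis phiN : forall g, E g -> phi g ^+ N = 1.

Lemma phi1 g : E g -> `|phi g| = 1.
Proof. by move=> Eg; apply/eqP; rewrite -(pexpr_eq1 N0) // -normrX phiN // normr1. Qed.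
Lemma phi0 g : E g -> phi g != 0.
Proof. by move=> Eg; apply: norm1_neq0; exact: phi1. Qed.

Definition rep (g : D) (ua : seq D * (D -> int)) :=
  uniq ua.1 /\ (forall x, x \in ua.1 -> E x) /\ g = \sum_(x <- ua.1) x *~ ua.2 x.
Definition val (ua : seq D * (D -> int)) := \prod_(x <- ua.1) phi x ^ ua.2 x.

Lemma sum_ext (u1 u : seq D) a : uniq u1 -> uniq u -> {subset u1 <= u} ->
  \sum_(x <- u) x *~ ext a u1 x = \sum_(x <- u1) x *~ a x.
Proof.
move=> U1 U s; rewrite -(big_sub _ _ U1 U s); apply: eq_bigr => x _.
by rewrite /ext; case: (x \in u1); rewrite ?mulr0z.
Qed.
Lemma prod_ext (u1 u : seq D) a : uniq u1 -> uniq u -> {subset u1 <= u} ->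
  \prod_(x <- u) phi x ^ ext a u1 x = \prod_(x <- u1) phi x ^ a x.
Proof.
move=> U1 U s; rewrite -(big_sub _ _ U1 U s); apply: eq_bigr => x _.
by rewrite /ext; case: (x \in u1); rewrite ?expr0z.
Qed.

Lemma val1 ua : (forall x, x \in ua.1 -> E x) -> `|val ua| = 1.
Proof.
move=> uE; rewrite /val normr_prod big1_seq // => x /andP [_ xu].
by apply: normz1; apply: phi1; apply: uE.
Qed.

Lemma comb g1 g2 ua1 ua2 (op : int -> int -> int) :
  rep g1 ua1 -> rep g2 ua2 ->
  let u := undup (ua1.1 ++ ua2.1) in
  let c := fun x => op (ext ua1.2 ua1.1 x) (ext ua2.2 ua2.1 x) in
  uniq u /\ (forall x, x \in u -> E x) /\
  (\sum_(x <- u) x *~ ext ua1.2 ua1.1 x = g1) /\ (\sum_(x <- u) x *~ ext ua2.2 ua2.1 x = g2) /\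
  (\prod_(x <- u) phi x ^ ext ua1.2 ua1.1 x = val ua1) /\
  (\prod_(x <- u) phi x ^ ext ua2.2 ua2.1 x = val ua2).
Proof.
move=> [U1 [E1 e1]] [U2 [E2 e2]] u c.
have Uu : uniq u := undup_uniq _.
have s1 : {subset ua1.1 <= u} by move=> x xu; rewrite mem_undup mem_cat xu.
have s2 : {subset ua2.1 <= u} by move=> x xu; rewrite mem_undup mem_cat xu orbT.
split => //; split.
  by move=> x; rewrite mem_undup mem_cat => /orP [/E1|/E2].
by rewrite !sum_ext // !prod_ext // -e1 -e2.
Qed.

Lemma wd g ua1 ua2 : rep g ua1 -> rep g ua2 -> val ua1 = val ua2.
Proof.
move=> r1 r2.
have [Uu [Eu [s1 [s2 [p1 p2]]]]] := comb (fun a b => a - b) r1 r2.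
set u := undup _ in Uu Eu s1 s2 p1 p2.
have dv := hRC (a := fun x => ext ua1.2 ua1.1 x - ext ua2.2 ua2.1 x) Uu Eu.
have : \sum_(x <- u) x *~ (ext ua1.2 ua1.1 x - ext ua2.2 ua2.1 x) = 0.
  by rewrite (eq_bigr (fun x => x *~ ext ua1.2 ua1.1 x - x *~ ext ua2.2 ua2.1 x))
     ?sumrB ?s1 ?s2 ?subrr // => x _; rewrite mulrzBr.
move=> /dv {}dv.
have : \prod_(x <- u) phi x ^ (ext ua1.2 ua1.1 x - ext ua2.2 ua2.1 x) = 1.
  rewrite big1_seq // => x /andP [_ xu].
  have := dv x xu => /divzK <-.
  by rewrite mulrC -exprz_exp -exprnP phiN ?exp1rz //; apply: Eu.
rewrite (eq_big_seq (fun x => phi x ^ ext ua1.2 ua1.1 x * (phi x ^ ext ua2.2 ua2.1 x)^-1)).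
  by rewrite big_split /= prodfV p1 p2 => /divr1_eq.
move=> x xu; rewrite expfzDr ?invr_expz //; exact: phi0 (Eu x xu).
Qed.

Definition span g := exists ua, rep g ua.
Definition fspan g := match pselect (span g) with
  | left e => val (proj1_sig (cid e)) | right _ => 1 end.

Lemma fspanE g ua : rep g ua -> fspan g = val ua.
Proof.
move=> r; rewrite /fspan; case: pselect => [e|ne]; last by exfalso; apply: ne; exists ua.
by case: (cid e) => ua' r' /=; apply: (wd r').
Qed.

Lemma span_sub : subgrp span.
Proof.
split; first by exists ([::], fun _ => 0%Z); split => //; rewrite big_nil.
move=> x y [ua1 r1] [ua2 r2].
have [Uu [Eu [s1 [s2 _]]]] := comb (fun a b => a - b) r1 r2.
exists (undup (ua1.1 ++ ua2.1), fun x => ext ua1.2 ua1.1 x - ext ua2.2 ua2.1 x).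
split => //; split => //=.
rewrite (eq_bigr (fun x => x *~ ext ua1.2 ua1.1 x - x *~ ext ua2.2 ua2.1 x)).
  by rewrite sumrB s1 s2.
by move=> z _; rewrite mulrzBr.
Qed.

Lemma span_phom : phom span fspan.
Proof.
split; first by move=> x [ua r]; rewrite (fspanE r); apply: val1; case: r => _ [].
move=> x y [ua1 r1] [ua2 r2].
have [Uu [Eu [s1 [s2 [p1 p2]]]]] := comb (fun a b => a + b) r1 r2.
have r : rep (x + y) (undup (ua1.1 ++ ua2.1), fun x => ext ua1.2 ua1.1 x + ext ua2.2 ua2.1 x).
  split => //; split => //=.
  by rewrite (eq_bigr (fun x => x *~ ext ua1.2 ua1.1 x + x *~ ext ua2.2 ua2.1 x))
    ?big_split ?s1 ?s2 // => z _; rewrite mulrzDr.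
rewrite (fspanE r) (fspanE r1) (fspanE r2) -p1 -p2 /val -big_split /=.
apply: eq_big_seq => z zu; rewrite expfzDr //; exact: phi0 (Eu z zu).
Qed.

Lemma RC_PR_ex : exists chi : D -> R[i], is_character chi /\ (forall g, E g -> chi g = phi g).
Proof.
have [chi [cchi e]] := extend span_sub span_phom.
exists chi; split; first exact/char_phom.
move=> g Eg.
have r : rep g ([:: g], fun _ => 1%Z).
  split => //; split; first by move=> x; rewrite inE => /eqP ->.
  by rewrite /= big_seq1 mulr1z.
by rewrite e; [rewrite (fspanE r) /val /= big_seq1 expr1z | exists ([:: g], fun _ => 1%Z)].
Qed.
End RCPR.

Lemma RC_PR (R : realType) (D : zmodType) (N : nat) (E : D -> Prop) :
  (0 < N)%N -> RC N E -> PR R N E.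
Proof. move=> N0 hRC phi phiN. exact: (RC_PR_ex N0 hRC phiN). Qed.


Lemma ord_exists (D : zmodType) (g : D) (c : nat) : (0 < c)%N -> g *+ c = 0 ->
  exists m, is_order g m /\ (m %| c)%N.
Proof.
move=> c0 gc.
have ex : exists m, `[< (0 < m)%N /\ g *+ m = 0 >] by exists c; apply/asboolP.
case: (ex_minnP ex) => m0 /asboolP [m0p gm0] minm.
exists m0; split.
  split => //; split => // j j0 jm; apply/eqP => gj.
  have := minm j; rewrite (_ : `[< _ >] = true); last by apply/asboolP.
  by move=> /(_ isT); rewrite leqNgt jm.
have r0 : (c %% m0 = 0)%N.
  have gr : g *+ (c %% m0) = 0.
    have e := divn_eq c m0; rewrite {1}e mulrnDr [(c %/ m0 * m0)%N]mulnC mulrnA gm0 mul0rn add0r in gc; exact: gc.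
  case E : (c %% m0)%N => [|r] //; exfalso.
  have := minm r.+1; rewrite (_ : `[< _ >] = true); last by apply/asboolP; split => //; rewrite -E.
  by move=> /(_ isT); rewrite -E leqNgt ltn_pmod.
by rewrite /dvdn r0.
Qed.

Section Pi.
Variables (D Q : zmodType) (K : D -> Prop) (pi : D -> Q).
Hypothesis hq : is_quotient_map K pi.
Lemma pi0 : pi 0 = 0.
Proof. have h := hq.1 0 0; rewrite addr0 in h; apply: (addrI (pi 0)); by rewrite addr0 -h. Qed.
Lemma piN x : pi (- x) = - pi x.
Proof. by apply/eqP; rewrite -addr_eq0 -hq.1 addNr pi0. Qed.
Lemma piz x i : pi (x *~ i) = pi x *~ i.
Proof.
have hn : forall n : nat, pi (x *+ n) = pi x *+ n.
  by elim=> [|n ih]; rewrite ?mulr0n ?pi0 // !mulrS hq.1 ih.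
case: i => n; first exact: hn.
by rewrite NegzE !mulrNz piN (hn n.+1).
Qed.
Lemma pisum (I : Type) (u : seq I) (F : I -> D) : pi (\sum_(i <- u) F i) = \sum_(i <- u) pi (F i).
Proof. by elim: u => [|a u ih]; rewrite ?big_nil ?pi0 // !big_cons hq.1 ih. Qed.
End Pi.

Lemma NT1 (p n k m : nat) (b : int) : prime p -> (0 < m)%N -> ~~ (p ^ k %| m)%N -> (k <= n)%N ->
  ((p ^ n)%N%:Z %| b * m%:Z)%Z -> ((p ^ (n + 1 - k))%N%:Z %| b)%Z.
Proof.
move=> pp m0 nd kn; rewrite !dvdzE abszM /=.
case b0 : (`|b|%N == 0%N); first by move/eqP: b0 => ->; rewrite dvdn0.
have bp : (0 < `|b|)%N by rewrite lt0n b0.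
rewrite !pfactor_dvdn // ?muln_gt0 ?bp // lognM //.
move: nd; rewrite pfactor_dvdn // -ltnNge => h1 h2; lia.
Qed.

Lemma NT2 (p n k e : nat) (b : int) : prime p -> (e < n + 1 - k)%N ->
  ((p ^ (n + 1 - k))%N%:Z %| b * (p ^ e)%N%:Z)%Z -> (p%:Z %| b)%Z.
Proof.
move=> pp lt; rewrite !dvdzE abszM /= => h.
have h' : (p ^ (n + 1 - k) %| p ^ e * `|b|)%N by rewrite mulnC.
have : (p ^ e * p %| p ^ e * `|b|)%N.
  by apply: dvdn_trans h'; rewrite -expnSr dvdn_exp2l.
by rewrite dvdn_pmul2l // expn_gt0 prime_gt0.
Qed.


Section Main.
Variables (Gamma Q : zmodType) (pi : Gamma -> Q) (E : Gamma -> Prop) (p n k : nat).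
Hypothesis pp : prime p.
Hypothesis k1 : (1 <= k)%N.
Hypothesis kn : (k <= n)%N.
Hypothesis hq : is_quotient_map (Gamma_pk p k) pi.

Definition lift (y : Q) : Gamma := match pselect (image_set pi E y) with
  | left e => let: exist2 x _ _ := cid2 e in x | right _ => 0 end.
Lemma liftP y : image_set pi E y -> E (lift y) /\ pi (lift y) = y.
Proof. by rewrite /lift; case: pselect => // e _; case: (cid2 e). Qed.

Lemma sum_mulz (u : seq Gamma) (a : Gamma -> int) (m : int) :
  (\sum_(x <- u) x *~ a x) *~ m = \sum_(x <- u) x *~ (a x * m).
Proof.
elim: u => [|y u ih]; first by rewrite !big_nil mul0rz.
by rewrite !big_cons mulrzDl ih mulrzA.
Qed.

Lemma partA : RC (p ^ n) E -> injective_on E pi /\ RC (p ^ (n + 1 - k)) (image_set pi E).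
Proof.
move=> hRC; split.
  move=> x y Ex Ey exy; apply/eqP; apply/negP => /negP nxy.
  have : pi (x - y) = 0 by rewrite hq.1 (piN hq) exy subrr.
  move=> /(hq.2.2 (x - y)) [m [[m0 [mo _]] nd]].
  have Exy : forall z, z \in [:: x; y] -> E z.
    by move=> z; rewrite !inE => /orP [/eqP ->|/eqP ->].
  have U2 : uniq [:: x; y] by rewrite /= inE nxy.
  have S : \sum_(z <- [:: x; y]) z *~ (if z == x then m%:Z else - m%:Z) = 0.
    rewrite big_cons big_seq1 eqxx (negPf (_ : y != x)); last by rewrite eq_sym.
    by rewrite mulrNz -mulrzBl.
  have := hRC _ _ U2 Exy S x; rewrite inE eqxx => /(_ isT) /=; rewrite ?eqxx.
  rewrite dvdzE /= => d.
  by move/negP: nd; apply; apply: dvdn_trans d; rewrite dvdn_exp2l.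
move=> u' b Uu' Eu' s0 y0 y0u.
have lK : {in u', forall y, pi (lift y) = y} by move=> y yu; exact: (liftP (Eu' y yu)).2.
set u := map lift u'.
have Uu : uniq u.
  rewrite map_inj_in_uniq // => y1 y2 y1u y2u e.
  by rewrite -(lK _ y1u) -(lK _ y2u) e.
have Eu : forall x, x \in u -> E x.
  by move=> x /mapP [y yu ->]; exact: (liftP (Eu' y yu)).1.
pose a x := b (pi x).
have gK : pi (\sum_(x <- u) x *~ a x) = 0.
  rewrite (pisum hq) big_map -[RHS]s0; apply: eq_big_seq => y yu.
  by rewrite (piz hq) /a lK.
move: gK => /(hq.2.2) [m [[m0 [mo _]] nd]].
have := hRC u (fun x => a x * m%:Z) Uu Eu.
rewrite -sum_mulz.
have -> : (\sum_(x <- u) x *~ a x) *~ m%:Z = 0 by exact: mo.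
move=> /(_ erefl (lift y0)); rewrite map_f // /a lK // => /(_ isT).
exact: NT1.
Qed.

Lemma partB : injective_on E pi -> RC (p ^ (n + 1 - k)) (image_set pi E) -> RC (p ^ n) E.
Proof.
move=> inj hRC' u a Uu Eu s0.
suff h : forall i, (i <= n)%N -> forall x, x \in u -> ((p ^ i)%N%:Z %| a x)%Z.
  by move=> x xu; apply: h.
elim=> [|i ih] lt x xu; first by rewrite expn0 dvd1z.
have ih' := ih (ltnW lt).
pose bb z := (a z %/ (p ^ i)%N%:Z)%Z.
have aE : forall z, z \in u -> a z = bb z * (p ^ i)%N%:Z by move=> z zu; rewrite divzK // ih'.
set e := (i.+1 - k)%N.
have ei : (e <= i)%N by rewrite /e; lia.
pose c z := bb z * (p ^ e)%N%:Z.
have gz : (\sum_(z <- u) z *~ c z) *~ (p ^ (i - e))%N%:Z = 0.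
  rewrite sum_mulz -[RHS]s0; apply: eq_big_seq => z zu; congr (_ *~ _).
  by rewrite aE // /c -mulrA -PoszM -expnD subnKC.
have pie : (0 < p ^ (i - e))%N by rewrite expn_gt0 prime_gt0.
have [m [mo md]] := ord_exists pie gz.
have nd : ~~ (p ^ k %| m)%N.
  apply/negP => h; have := dvdn_trans h md; rewrite dvdn_Pexp2l ?prime_gt1 //.
  by rewrite /e; lia.
have pg : pi (\sum_(z <- u) z *~ c z) = 0 by apply/(hq.2.2 _); exists m.
have liftK : forall z, z \in u -> lift (pi z) = z.
  move=> z zu; have [l1 l2] := @liftP (pi z) (ex_intro2 _ _ z (Eu z zu) erefl).
  exact: inj l1 (Eu z zu) l2.
set u' := map pi u.
have Uu' : uniq u'.
  by rewrite map_inj_in_uniq // => z1 z2 z1u z2u; apply: inj; apply: Eu.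
have Eu' : forall y, y \in u' -> image_set pi E y.
  by move=> y /mapP [z zu ->]; exists z => //; apply: Eu.
pose d y := c (lift y).
have S : \sum_(y <- u') y *~ d y = 0.
  rewrite big_map -[RHS]pg (pisum hq); apply: eq_big_seq => z zu.
  by rewrite (piz hq) /d liftK.
have := hRC' u' d Uu' Eu' S (pi x) (map_f _ xu); rewrite /d liftK // => hd.
have pb : (p%:Z %| bb x)%Z by apply: (NT2 pp _ hd); rewrite /e; lia.
rewrite aE // expnSr PoszM [X in (_ %| X)%Z]mulrC.
exact: dvdz_mul (dvdzz _) pb.
Qed.
End Main.

End Helpers.

Unset Implicit Arguments.

Theorem proposition3p2 (R : realType) (Gamma : zmodType) (n p : nat)
  (hn : (0 < n)%N) (hp : prime p)
  (Q : nat -> zmodType) (pi : forall k : nat, Gamma -> Q k)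
  (hpi : forall k : nat, (0 < k)%N -> is_quotient_map (Gamma_pk p k) (pi k))
  (E : Gamma -> Prop) :
  (PR R (p ^ n) E <->
     (forall k : nat, (1 <= k <= n)%N ->
        injective_on E (pi k) /\ PR R (p ^ (n + 1 - k)) (image_set (pi k) E))) /\
  (PR R (p ^ n) E <->
     (exists k : nat, (1 <= k <= n)%N /\
        injective_on E (pi k) /\ PR R (p ^ (n + 1 - k)) (image_set (pi k) E))).
Proof.
have pn : (0 < p ^ n)%N by rewrite expn_gt0 prime_gt0.
have fwd : forall k, (1 <= k <= n)%N -> PR R (p ^ n) E ->
    injective_on E (pi k) /\ PR R (p ^ (n + 1 - k)) (image_set (pi k) E).
  move=> k /andP [k1 kn] /(Helpers.PR_RC hp hn) h.
  have [i r] := Helpers.partA hp kn (hpi k k1) h; split => //.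
  by apply: Helpers.RC_PR => //; rewrite expn_gt0 prime_gt0.
have bwd : forall k, (1 <= k <= n)%N ->
    injective_on E (pi k) -> PR R (p ^ (n + 1 - k)) (image_set (pi k) E) -> PR R (p ^ n) E.
  move=> k /andP [k1 kn] i r; apply: Helpers.RC_PR => //.
  apply: (Helpers.partB hp k1 kn (hpi k k1) i).
  by apply: (Helpers.PR_RC hp) r; rewrite subn_gt0 addn1 ltnS.
have k1 : (1 <= 1 <= n)%N by rewrite leqnn hn.
split; split.
- by move=> h k kk; apply: fwd.
- by move=> h; have [i r] := h 1%N k1; apply: (bwd 1%N).
- by move=> h; exists 1%N; split => //; apply: fwd.
- by move=> [k [kk [i r]]]; apply: (bwd k).
Qed.
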